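(* Let $m,n$ be integers with $3\leq m\leq n$ and $n\equiv -1 \pmod m$. Then every $(m,n;6)$-bipartite biregular graph has at least $\left(\frac{n}{m}+1\right)(n+1)(m-1)$ vertices, i.e. $B_c(m,n;6)\geq \left(\frac{n}{m}+1\right)(n+1)(m-1)$. Moreover, if a Steiner system $S(2,m,n(m-1)+m)$ exists, then deleting one point of it together with all blocks containing that point yields an incidence structure whose incidence graph is an $(m,n;6)$-bipartite biregular graph on exactly $\left(\frac{n}{m}+1\right)(n+1)(m-1)$ vertices; in that case this graph is an $(m,n;6)$-bipartite biregular cage and $B_c(m,n;6)=\left(\frac{n}{m}+1\right)(n+1)(m-1)$.
   Context: For integers $a,b\geq 2$ and even $g\ge 4$, an $(a,b;g)$-bipartite biregular graph is a finite simple bipartite graph of girth exactly $g$ in which all vertices of one bipartition class have degree $a$ and all vertices of the other class have degree $b$. An $(a,b;g)$-bipartite biregular cage is such a graph of minimum possible order, and $B_c(a,b;g)$ denotes this minimum order. A Steiner system $S(2,k,v)$ is a set of $v$ points together with a family of $k$-element subsets (blocks) such that every pair of distinct points lies in exactly one block. The incidence graph of a point-block structure is the bipartite graph on points and blocks with a point adjacent to a block iff the point lies in the block. *)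

(* Defs.v *)
From mathcomp Require Import all_boot all_order all_algebra.
Set Implicit Arguments. Unset Strict Implicit. Unset Printing Implicit Defensive.
Import Order.TTheory GRing.Theory Num.Theory.

Definition simple_graph (T : finType) (e : rel T) : Prop :=
  symmetric e /\ irreflexive e.

Definition deg (T : finType) (e : rel T) (x : T) : nat := #|[set y | e x y]|.

Definition is_cycle (T : finType) (e : rel T) (s : seq T) : bool :=
  [&& 2 < size s, cycle e s & uniq s].

Definition girth_eq (T : finType) (e : rel T) (g : nat) : Prop :=
  (exists s, is_cycle e s /\ size s = g) /\
  (forall s, is_cycle e s -> g <= size s).

Definition bip_bireg (a b g : nat) (T : finType) (e : rel T) : Prop :=
  simple_graph e /\
  (exists A : {set T},
      (forall x y, e x y -> (x \in A) != (y \in A)) /\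
      (forall x, x \in A -> deg e x = a) /\
      (forall x, x \notin A -> deg e x = b)) /\
  girth_eq e g.

Definition bip_cage (a b g : nat) (T : finType) (e : rel T) : Prop :=
  bip_bireg a b g e /\
  forall (T' : finType) (e' : rel T'), bip_bireg a b g e' -> #|T| <= #|T'|.

Definition Bc_eq (a b g N : nat) : Prop :=
  (exists (T : finType) (e : rel T), bip_bireg a b g e /\ #|T| = N) /\
  (forall (T : finType) (e : rel T), bip_bireg a b g e -> N <= #|T|).

Definition steiner2 (k v : nat) (P : finType) (Bl : {set {set P}}) : Prop :=
  #|P| = v /\
  (forall B, B \in Bl -> #|B| = k) /\
  (forall x y : P, x != y -> exists! B, B \in Bl /\ x \in B /\ y \in B).

Definition dvert (P : finType) (Bl : {set {set P}}) (p : P) : finType :=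
  ({x : P | x != p} + {B : {set P} | (B \in Bl) && (p \notin B)})%type.

Definition dinc (P : finType) (Bl : {set {set P}}) (p : P) : rel (dvert Bl p) :=
  fun u v =>
    match u, v with
    | inl x, inr B => val x \in val B
    | inr B, inl x => val x \in val B
    | _, _ => false
    end.

Definition cage_bound (m n : nat) : rat :=
  ((n%:R / m%:R + 1) * (n.+1)%:R * (m - 1)%:R)%R.
Arguments dinc {P} Bl p.
Arguments dvert {P} Bl p.

(* Main.v *)
Require Import Defs.
From mathcomp Require Import all_boot all_order all_algebra.
From mathcomp Require Import zify ring lra.
Import GRing.Theory Num.Theory.
Set Implicit Arguments. Unset Strict Implicit. Unset Printing Implicit Defensive.

Lemma card_ind (T : finType) (A : pred T) : #|A| = \sum_(x : T) (x \in A).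
Proof. by rewrite -sum1_card big_mkcond /=; apply eq_bigr => x _; case: (x \in A). Qed.

Lemma degE (T : finType) (e : rel T) x : deg e x = \sum_y (e x y : nat).
Proof. by rewrite /deg card_ind; apply eq_bigr => y _; rewrite inE. Qed.

Lemma dcount (T : finType) (e : rel T) (A : {set T}) a b :
  symmetric e -> (forall x y, e x y -> (x \in A) != (y \in A)) ->
  (forall x, x \in A -> deg e x = a) -> (forall x, x \notin A -> deg e x = b) ->
  a * #|A| = b * #|~: A|.
Proof.
move=> sym bip da db.
have E1: \sum_(x in A) deg e x = a * #|A|.
  by rewrite -sum1_card big_distrr /=; apply eq_bigr => x xA; rewrite da // muln1.
have E2: \sum_(x in ~: A) deg e x = b * #|~: A|.
  by rewrite -sum1_card big_distrr /=; apply eq_bigr => x; rewrite inE => xA; rewrite db // muln1.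
rewrite -E1 -E2.
transitivity (\sum_(x in A) \sum_(y in ~: A) (e x y : nat)).
  apply eq_bigr => x xA; rewrite degE (bigID (mem (~: A))) /= [X in _ + X]big1 ?addn0 //.
  move=> y; rewrite !inE negbK => yA; case exy: (e x y) => //.
  by move: (bip _ _ exy); rewrite xA yA.
rewrite exchange_big; apply eq_bigr => y; rewrite inE => yA.
rewrite degE [in RHS](bigID (mem A)) /= [X in _ = _ + X]big1 ?addn0.
  by apply eq_bigr => x _; rewrite sym.
move=> x xA; case exy: (e y x) => //.
by move: (bip _ _ exy); rewrite (negbTE xA) (negbTE yA).
Qed.

Lemma lower (T : finType) (e : rel T) (A : {set T}) a b :
  symmetric e -> (forall x y, e x y -> (x \in A) != (y \in A)) ->
  (forall x, x \in A -> deg e x = a) -> (forall x, x \notin A -> deg e x = b) ->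
  (forall p q r s, e p q -> e q r -> e r s -> e s p -> p != r -> q != s -> False) ->
  (exists x y, e x y) -> b * (a - 1) + 1 <= #|~: A|.
Proof.
move=> sym bip da db no4 [x [y exy]].
have [v vA]: exists v, v \notin A.
  case xA: (x \in A); last by exists x; rewrite xA.
  by exists y; move: (bip _ _ exy); rewrite xA; case: (y \in A).
set N := [set u | e v u].
have cN : #|N| = b by rewrite -(db v vA).
have NA : forall u, u \in N -> u \in A.
  move=> u; rewrite inE => /bip; by rewrite (negbTE vA); case: (u \in A).
set S := fun u => [set w | e u w] :\ v.
have cS : forall u, u \in N -> #|S u| = a - 1.
  move=> u uN; rewrite -(da u (NA u uN)) /deg (cardsD1 v [set w | e u w]).
  by rewrite inE sym; move: uN; rewrite inE => ->; rewrite add1n subn1.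
set C := ~: A :\ v.
have cC : #|~: A| = #|C| + 1 by rewrite (cardsD1 v) inE vA addnC.
rewrite cC leq_add2r.
have -> : b * (a - 1) = \sum_(u in N) #|S u|.
  by rewrite -cN -sum_nat_const; apply eq_bigr => u uN; rewrite cS.
have -> : \sum_(u in N) #|S u| = \sum_w #|[set u in N | w \in S u]|.
  under eq_bigr => u _ do rewrite card_ind.
  rewrite exchange_big /=; apply eq_bigr => w _.
  by rewrite card_ind big_mkcond /=; apply eq_bigr => u _; rewrite inE; case: (u \in N).
rewrite [X in _ <= X]card_ind; apply leq_sum => w _.
case wC: (w \in C).
  apply/card_le1_eqP => u1 u2; rewrite !inE => /andP [u1N u1S] /andP [u2N u2S].
  apply/eqP/negPn/negP => ne.
  move: u1S u2S => /andP [wv e1] /andP [_ e2].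
  apply: (no4 v u1 w u2 u1N e1) => //; first by rewrite sym.
  by rewrite sym.
  by rewrite eq_sym.
  by rewrite eq_sym.
rewrite leqn0 cards_eq0; apply/eqP/setP => u; rewrite !inE.
apply/negbTE/negP => /andP [uN] /andP [wv euw].
have uN' : u \in N by rewrite inE.
move: wC; rewrite !inE wv /=; move: (bip _ _ euw); rewrite (NA u uN').
by case: (w \in A).
Qed.

Lemma path_par (T : eqType) (e : rel T) (f : T -> bool) :
  (forall x y, e x y -> f x != f y) ->
  forall s x, path e x s -> f (last x s) = f x (+) odd (size s).
Proof.
move=> H; elim=> [|y s IH] x /=; first by rewrite addbF.
move=> /andP [exy ps]; rewrite (IH y ps).
by move: (H _ _ exy); case: (f x); case: (f y); case: (odd (size s)).
Qed.

Lemma cycle_even (T : eqType) (e : rel T) (f : T -> bool) :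
  (forall x y, e x y -> f x != f y) ->
  forall s, cycle e s -> ~~ odd (size s).
Proof.
move=> H [|x s] //= /(path_par H); rewrite last_rcons size_rcons.
by rewrite /= negbK; case: (f x); case: (odd (size s)).
Qed.

Lemma girth6 (T : finType) (e : rel T) (A : {set T}) :
  (forall x y, e x y -> (x \in A) != (y \in A)) ->
  (forall p q r s, e p q -> e q r -> e r s -> e s p -> p != r -> q != s -> False) ->
  forall s, is_cycle e s -> 6 <= size s.
Proof.
move=> bip no4 s /and3P [s3 cs us].
have ev := cycle_even bip cs.
case: s s3 cs us ev => [|p [|q [|r [|t [|u s]]]]] //=.
move=> _ /and5P [epq eqr ert etp _] U _.
exfalso; apply: (no4 p q r t) => //; apply/negP => /eqP E; move: U; rewrite E /= !inE !eqxx /=.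
  by rewrite !orbT.
by rewrite orbT /= andbF.
by move=> _ _ _; case: (size s).
Qed.

Lemma no4_of_girth (T : finType) (e : rel T) (A : {set T}) :
  (forall x y, e x y -> (x \in A) != (y \in A)) ->
  (forall s, is_cycle e s -> 6 <= size s) ->
  (forall p q r s, e p q -> e q r -> e r s -> e s p -> p != r -> q != s -> False).
Proof.
move=> bip g p q r s epq eqr ers esp pr qs.
have ne : forall x y, e x y -> x != y.
  by move=> x y /bip; apply: contra => /eqP ->.
have : is_cycle e [:: p; q; r; s].
  rewrite /is_cycle /= epq eqr ers esp /= !inE !negb_or pr qs /= (ne p q) // (ne q r) // (ne r s) //.
  by rewrite eq_sym ne.
by move/g.
Qed.

Lemma arith m n k : 3 <= m -> m %| n.+1 -> m %| k -> n * (m - 1) + 1 <= k ->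
  n.+1 * (m - 1) <= k.
Proof.
move=> m3 /dvdnP [q hq] /dvdnP [j hj] h.
have E : n.+1 * (m - 1) = n * (m - 1) + (m - 1) by rewrite mulSn addnC.
have E2 : n.+1 * (m - 1) = m * (q * (m - 1)) by rewrite hq mulnAC mulnC.
have : m * (q * (m - 1)) < m * j.+1.
  rewrite -E2 mulnS; rewrite mulnC in hj; lia.
rewrite ltn_pmul2l; last by lia.
rewrite ltnS -(leq_pmul2l (_ : 0 < m)); last by lia.
move=> H; rewrite E2 hj (mulnC j); exact H.
Qed.

Lemma part1_nat m n (T : finType) (e : rel T) :
  3 <= m -> n.+1 = 0 %[mod m] -> bip_bireg m n 6 e ->
  exists A : {set T}, [/\ m * #|A| = n * #|~: A|, n.+1 * (m - 1) <= #|~: A| &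
     #|T| = #|A| + #|~: A|].
Proof.
move=> m3 hmod [[sym irr] [[A [bip [da db]]] [[s [cs s6]] g]]].
exists A.
have dc := dcount sym bip da db.
have no4 := no4_of_girth bip g.
have ex : exists x y, e x y.
  move: cs; case: s s6 => [|x [|y s]] //= _ /and3P [_ /andP [exy _] _].
  by exists x, y.
have lo := lower sym bip da db no4 ex.
have dm : m %| n.+1 by rewrite /dvdn hmod mod0n.
have cop : coprime m n := coprime_dvdl dm (coprimeSn n).
split => //; last by rewrite cardsC.
apply: arith => //; first by rewrite -(Gauss_dvdr _ cop) -dc dvdn_mulr.
Qed.

Lemma cage_boundE m n : 0 < m ->
  cage_bound m n = (((n + m) * (n.+1 * (m - 1)))%:R / m%:R)%R.
Proof.
move=> m0; rewrite /cage_bound !natrM natrD natrB // -addn1 natrD.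
have : (m%:R : rat) != 0%R by rewrite pnatr_eq0 -lt0n.
move=> h; field.
exact h.
Qed.

Lemma part1 m n (T : finType) (e : rel T) :
  3 <= m -> n.+1 = 0 %[mod m] -> bip_bireg m n 6 e ->
  (cage_bound m n <= (#|T|)%:R)%R.
Proof.
move=> m3 hmod bb; have [A [dc lo cT]] := part1_nat m3 hmod bb.
rewrite cage_boundE; last by lia.
rewrite ler_pdivrMr; last by rewrite ltr0n; lia.
rewrite -natrM ler_nat cT.
have : (n + m) * (n.+1 * (m - 1)) <= (n + m) * #|~: A| by rewrite leq_mul2l lo orbT.
move/leq_trans; apply.
by rewrite !mulnDl (mulnC #|A|) dc (mulnC #|~: A|).
Qed.

Lemma card_sub_pred (T : finType) (Q : pred T) (R : pred T) :
  #|[set y : {x | Q x} | R (val y)]| = #|[set x | Q x && R x]|.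
Proof.
rewrite -(card_imset _ val_inj); apply: eq_card => x; rewrite [in RHS]inE.
apply/imsetP/idP => [[y]|/andP [qx rx]].
  by rewrite inE => ry ->; rewrite (valP y) ry.
by exists (exist _ x qx); rewrite ?inE.
Qed.

Section Steiner.
Variables (P : finType) (Bl : {set {set P}}) (m v : nat).
Hypothesis hS : steiner2 m v Bl.

Lemma blk_ex x y : x != y -> exists B, [/\ B \in Bl, x \in B & y \in B].
Proof.
case: hS => _ [_ hu] /hu [B [[h1 [h2 h3]] _]]; by exists B.
Qed.

Lemma blk_uniq x y B C : x != y -> B \in Bl -> C \in Bl -> x \in B -> y \in B ->
  x \in C -> y \in C -> B = C.
Proof.
case: hS => _ [_ hu] /hu [B0 [_ u]] BB CB xB yB xC yC.
by rewrite -(u B) ?(u C).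
Qed.

Lemma repl x : #|[set B in Bl | x \in B]| * (m - 1) = v - 1.
Proof.
case: hS => cP [cB hu].
rewrite -cP [in RHS]subn1 -(cardsC1 x) [in RHS]card_ind -sum_nat_const.
transitivity (\sum_B \sum_y ([&& B \in Bl, x \in B, y \in B & y != x] : nat)).
  rewrite big_mkcond; apply eq_bigr => B _; rewrite inE.
  case BBl: (B \in Bl); case xB: (x \in B) => /=; try by rewrite big1_eq.
  rewrite -(cB B BBl) (cardsD1 x B) xB add1n subn1 /= card_ind.
  by apply eq_bigr => y _; rewrite !inE andbC.
rewrite exchange_big; apply eq_bigr => y _; rewrite !inE.
case yx: (y == x) => /=.
  by apply: big1 => B _; rewrite !andbF.
have := hu x y; rewrite eq_sym yx => /(_ isT) [B0 [[h1 [h2 h3]] u]].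
transitivity #|[set B | [&& B \in Bl, x \in B & y \in B]]|.
  by rewrite card_ind; apply eq_bigr => B _; rewrite inE andbT.
apply: (@eq_card1 _ B0) => B; rewrite !inE; apply/and3P/eqP.
  by move=> [b1 b2 b3]; rewrite (u B).
by move=> ->.
Qed.

End Steiner.

Section Derived.
Variables (P : finType) (Bl : {set {set P}}) (p : P) (m n : nat).
Hypothesis m3 : 3 <= m.
Hypothesis hS : steiner2 m (n * (m - 1) + m) Bl.

Lemma rdeg x : #|[set B in Bl | x \in B]| = n.+1.
Proof.
have h := repl hS x.
apply/eqP; rewrite -(eqn_pmul2r (_ : 0 < m - 1)); last by lia.
rewrite h mulSn; apply/eqP; rewrite [RHS]addnC addnBA //; exact: leq_trans m3.
Qed.

Lemma ddeg_l x : x != p -> #|[set B | ((B \in Bl) && (p \notin B)) && (x \in B)]| = n.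
Proof.
move=> xp; have [Bxp [h1 h2 h3]] := blk_ex hS xp.
have := rdeg x; rewrite (cardsD1 Bxp) inE h1 h2 add1n => [[<-]].
apply: eq_card => B; rewrite !inE.
case BBl: (B \in Bl); case xB: (x \in B); rewrite /= ?andbF //.
case pB: (p \in B) => /=.
  by rewrite (blk_uniq hS xp BBl h1 xB pB h2 h3) eqxx.
by rewrite andbT; symmetry; apply/eqP => E; move: pB; rewrite E h3.
Qed.

Lemma deg_inl (x : {x : P | x != p}) : deg (dinc Bl p) (inl x) = n.
Proof.
rewrite degE big_sumType /= big1_eq add0n.
transitivity #|[set B : {B : {set P} | (B \in Bl) && (p \notin B)} | val x \in val B]|.
  by rewrite card_ind; apply eq_bigr => B _; rewrite inE.
rewrite (card_sub_pred (fun B => (B \in Bl) && (p \notin B)) (fun B => val x \in B)).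
exact: ddeg_l (valP x).
Qed.

Lemma deg_inr (B : {B : {set P} | (B \in Bl) && (p \notin B)}) : deg (dinc Bl p) (inr B) = m.
Proof.
rewrite degE big_sumType /= [X in _ + X]big1_eq addn0.
transitivity #|[set y : {x : P | x != p} | val y \in val B]|.
  by rewrite card_ind; apply eq_bigr => y _; rewrite inE.
rewrite (card_sub_pred (fun y => y != p) (fun y => y \in val B)).
case: hS => _ [cB _]; case: B => B /= /andP [BBl pB]; rewrite -(cB B BBl).
apply: eq_card => y; rewrite inE; case: eqP => [->|] //=.
by rewrite (negbTE pB).
Qed.

End Derived.

Section Derived2.
Variables (P : finType) (Bl : {set {set P}}) (p : P) (m n : nat).
Hypothesis m3 : 3 <= m.
Hypothesis mn : m <= n.
Hypothesis hS : steiner2 m (n * (m - 1) + m) Bl.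

Lemma no4_d (a b c d : dvert Bl p) : dinc Bl p a b -> dinc Bl p b c ->
  dinc Bl p c d -> dinc Bl p d a -> a != c -> b != d -> False.
Proof.
case: a => [x|B]; case: b => [y|C]; case: c => [z|D]; case: d => [w|E] //=.
  move=> h1 h2 h3 h4 ac bd.
  have xz : val x != val z by rewrite (inj_eq val_inj); apply: contraNneq ac => ->.
  move/negP: bd; apply; apply/eqP; congr inr; apply: val_inj.
  by apply: (blk_uniq hS xz) => //; [case/andP: (valP C) | case/andP: (valP E)].
move=> h1 h2 h3 h4 ac bd.
have yw : val y != val w by rewrite (inj_eq val_inj); apply: contraNneq bd => ->.
move/negP: ac; apply; apply/eqP; congr inr; apply: val_inj.
by apply: (blk_uniq hS yw) => //; [case/andP: (valP B) | case/andP: (valP D)].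
Qed.


Lemma cyc6 (T : finType) (e : rel T) (h : T -> bool) a b c d f g :
  e a b -> e b c -> e c d -> e d f -> e f g -> e g a ->
  h a = false -> h c = false -> h f = false -> h b -> h d -> h g ->
  a != c -> a != f -> c != f -> b != d -> b != g -> d != g ->
  is_cycle e [:: a; b; c; d; f; g].
Proof.
move=> eab ebc ecd edf efg ega ha hc hf hb hd hg ac af cf bd bg dg.
have ne : forall x y, h x = false -> h y -> x != y.
  by move=> x y hx hy; apply/eqP => E; rewrite E hy in hx.
rewrite /is_cycle /= eab ebc ecd edf efg ega /= !inE !negb_or ac af cf bd bg dg.
rewrite (eq_sym b c) (eq_sym b f) (eq_sym d f).
by rewrite !ne.
Qed.

Lemma six : exists s, is_cycle (dinc Bl p) s /\ size s = 6.
Proof.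
case: (hS) => cP [cB hu].
have : 0 < #|[set~ p]| by rewrite cardsC1 cP -subn1; move: (n * (m - 1)) => k; lia.
case/card_gt0P => x; rewrite !inE => xp.
have : 1 < #|[set B | ((B \in Bl) && (p \notin B)) && (x \in B)]|.
  by rewrite (ddeg_l m3 hS xp); lia.
case/card_gt1P => B1 [B2 []]; rewrite !inE.
move=> /andP [/andP [B1Bl pB1] xB1] /andP [/andP [B2Bl pB2] xB2] B12.
have c1 := cB _ B1Bl; rewrite (cardsD1 x) xB1 in c1.
have c2 := cB _ B2Bl; rewrite (cardsD1 x) xB2 in c2.
have : 0 < #|B1 :\ x| by lia.
case/card_gt0P => y; rewrite !inE => /andP [yx yB1].
have : 1 < #|B2 :\ x| by lia.
case/card_gt1P => z1 [z2 []]; rewrite !inE => /andP [z1x z1B2] /andP [z2x z2B2] z12.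
have yp : y != p by apply: contraNneq pB1 => <-.
have py : p != y by rewrite eq_sym.
have [L [LBl pL yL]] := blk_ex hS py.
have [z [zB2 zx zL]] : exists z, [/\ z \in B2, z != x & z \notin L].
  case z1L: (z1 \in L); last by exists z1; rewrite z1L.
  case z2L: (z2 \in L); last by exists z2; rewrite z2L.
  have E := blk_uniq hS z12 LBl B2Bl z1L z2L z1B2 z2B2.
  by move: pB2; rewrite -E pL.
have xy : x != y by rewrite eq_sym.
have xz : x != z by rewrite eq_sym.
have yz : y != z.
  apply: contraNneq B12 => E.
  by apply/eqP; apply: (blk_uniq hS xy) => //; rewrite E.
have [C [CBl yC zC]] := blk_ex hS yz.
have pC : p \notin C.
  apply/negP => pC'.
  have E := blk_uniq hS py CBl LBl pC' yC pL yL.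
  by move: zL; rewrite -E zC.
have zp : z != p by apply: contraNneq pB2 => <-.
have CB1 : C != B1.
  apply/eqP => E; move/eqP: B12; apply; apply: (blk_uniq hS xz) => //; by rewrite -E.
have CB2 : C != B2.
  apply/eqP => E; move/eqP: B12; apply; apply: (blk_uniq hS xy) => //; by rewrite -E.
pose X : {x : P | x != p} := exist _ x xp.
pose Y : {x : P | x != p} := exist _ y yp.
pose Z : {x : P | x != p} := exist _ z zp.
pose BB1 : {B : {set P} | (B \in Bl) && (p \notin B)} := exist _ B1 (introT andP (conj B1Bl pB1)).
pose BB2 : {B : {set P} | (B \in Bl) && (p \notin B)} := exist _ B2 (introT andP (conj B2Bl pB2)).
pose CC : {B : {set P} | (B \in Bl) && (p \notin B)} := exist _ C (introT andP (conj CBl pC)).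
exists [:: inl X; inr BB1; inl Y; inr CC; inl Z; inr BB2]; split => //.
have XY : (X == Y) = false by apply/negbTE; apply: contra xy => /eqP E; apply/eqP; exact: (congr1 val E).
have XZ : (X == Z) = false by apply/negbTE; apply: contra xz => /eqP E; apply/eqP; exact: (congr1 val E).
have YZ : (Y == Z) = false by apply/negbTE; apply: contra yz => /eqP E; apply/eqP; exact: (congr1 val E).
have B1C : (BB1 == CC) = false by apply/negbTE; apply: contra CB1 => /eqP E; apply/eqP; exact: (congr1 val (esym E)).
have B1B2 : (BB1 == BB2) = false by apply/negbTE; apply: contra B12 => /eqP E; apply/eqP; exact: (congr1 val E).
have CB2' : (CC == BB2) = false by apply/negbTE; apply: contra CB2 => /eqP E; apply/eqP; exact: (congr1 val E).
apply: (cyc6 (h := fun u : dvert Bl p => if u is inr _ then true else false)).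
- exact: xB1.
- exact: yB1.
- exact: yC.
- exact: zC.
- exact: zB2.
- exact: xB2.
- by [].
- by [].
- by [].
- by [].
- by [].
- by [].
- by rewrite (inj_eq inl_inj) XY.
- by rewrite (inj_eq inl_inj) XZ.
- by rewrite (inj_eq inl_inj) YZ.
- by rewrite (inj_eq inr_inj) B1C.
- by rewrite (inj_eq inr_inj) B1B2.
- by rewrite (inj_eq inr_inj) CB2'.
Qed.


Definition Aset : {set dvert Bl p} := [set u | if u is inr _ then true else false].

Lemma Abip : forall x y, dinc Bl p x y -> (x \in Aset) != (y \in Aset).
Proof. by move=> [x|B] [y|C]; rewrite /Aset !inE. Qed.

Lemma Adeg1 : forall x, x \in Aset -> deg (dinc Bl p) x = m.
Proof. move=> [x|B]; rewrite /Aset inE; [by [] | move=> _; exact: deg_inr hS B]. Qed.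

Lemma Adeg2 : forall x, x \notin Aset -> deg (dinc Bl p) x = n.
Proof. move=> [x|B]; rewrite /Aset inE; [move=> _; exact: deg_inl m3 hS x | by []]. Qed.

Lemma dsym : symmetric (dinc Bl p).
Proof. by move=> [x|B] [y|C]. Qed.

Lemma dbb : bip_bireg m n 6 (dinc Bl p).
Proof.
split; first by split; [exact: dsym | move=> [x|B]].
split; first by exists Aset; split; [exact: Abip | split; [exact: Adeg1 | exact: Adeg2]].
split; first exact: six.
exact: (girth6 Abip no4_d).
Qed.

Lemma cardCA : #|~: Aset| = n.+1 * (m - 1).
Proof.
case: (hS) => cP _.
transitivity (\sum_(x : {x : P | x != p}) 1 + \sum_(B : {B : {set P} | (B \in Bl) && (p \notin B)}) 0).
  by rewrite card_ind big_sumType; congr (_ + _); apply eq_bigr => ? _; rewrite !inE.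
rewrite big1_eq addn0 sum1_card card_sig.
transitivity #|[set~ p]|; first by apply: eq_card => x; rewrite !inE.
rewrite cardsC1 cP mulSn -subn1.
move: (n * (m - 1)) => k; move: m3; clear; lia.
Qed.

Lemma dcountA : m * #|Aset| = n * #|~: Aset|.
Proof. exact: (dcount dsym Abip Adeg1 Adeg2). Qed.

End Derived2.

Unset Implicit Arguments.
Theorem mainTheorem1 (m n : nat) :
  3 <= m -> m <= n -> n.+1 = 0 %[mod m] ->
  (forall (T : finType) (e : rel T),
      bip_bireg m n 6 e -> (cage_bound m n <= ((#|T|)%:R))%R) /\
  (forall (P : finType) (Bl : {set {set P}}) (p : P),
      steiner2 m (n * (m - 1) + m) Bl ->
      [/\ bip_bireg m n 6 (dinc Bl p),
          (((#|dvert Bl p|)%:R)%R = cage_bound m n :> rat),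
          bip_cage m n 6 (dinc Bl p) &
          Bc_eq m n 6 #|dvert Bl p| ]).
Proof.
move=> m3 mn hmod; split.
  by move=> T e bb; exact: part1 m3 hmod bb.
move=> P Bl p hS.
have bb := dbb p m3 mn hS.
have ceq : (((#|dvert Bl p|)%:R)%R = cage_bound m n :> rat).
  rewrite cage_boundE; last by lia.
  have dc := dcountA p m3 hS.
  have cc := cardCA p m3 hS.
  rewrite -(cardsC (Aset Bl p)) -cc.
  have -> : (n + m) * #|~: Aset Bl p| = (#|Aset Bl p| + #|~: Aset Bl p|) * m.
    by rewrite !mulnDl (mulnC #|Aset Bl p|) dc (mulnC #|~: Aset Bl p|).
  rewrite natrM mulfK //; rewrite pnatr_eq0 -lt0n; lia.
have low : forall (T' : finType) (e' : rel T'), bip_bireg m n 6 e' -> #|dvert Bl p| <= #|T'|.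
  move=> T' e' bb'; have := part1 m3 hmod bb'.
  by rewrite -ceq ler_nat.
split => //.
split; last exact: low.
by exists (dvert Bl p), (dinc Bl p).
Qed.
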